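(* Let $s,b\ge1$ and let $(a_n)$ be the $(s,b)$-Generacci sequence. Define $f$ on positive integers by $f(kb+j)=sb+j-1$ for $k\ge0$ and $j\in\{1,\dots,b\}$. Then for every integer $N\ge s$ and every $j\in\{2,\dots,b+1\}$, writing $n=j+Nb$, \[ a_n \;=\; a_{n-1}+a_{n-1-f(n-1)}, \qquad\text{i.e.}\qquad a_{j+Nb}=a_{j-1+Nb}+a_{1+(N-s)b}. \]
   Context: Fix integers $s,b\ge1$. For an increasing sequence of positive integers $(a_i)_{i\ge1}$, the bins are $\mathcal B_n=\{a_{b(n-1)+1},\dots,a_{bn}\}$ for $n\ge1$, and $\mathcal B_n=\emptyset$ for $n\le 0$. An $(s,b)$-Generacci legal decomposition of a positive integer $m$ using this sequence is an expression $m=a_{\ell_1}+\cdots+a_{\ell_k}$ with $a_{\ell_1}>a_{\ell_2}>\cdots>a_{\ell_k}$ such that for all $i$ and all $j$, $\{a_{\ell_i},a_{\ell_{i+1}}\}\not\subset \mathcal B_{j-s}\cup\mathcal B_{j-s+1}\cup\cdots\cup\mathcal B_j$ (so no two summands lie in the same bin, and the bins containing any two summands have at least $s$ bins strictly between them). The $(s,b)$-Generacci sequence is the increasing sequence of positive integers $(a_i)_{i\ge1}$ in which each $a_i$ is the smallest positive integer that has no $(s,b)$-Generacci legal decomposition using only elements of $\{a_1,\dots,a_{i-1}\}$. *)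

(* Defs.v *)
From mathcomp Require Import all_boot.
Set Implicit Arguments. Unset Strict Implicit. Unset Printing Implicit Defensive.

(* Sequences are functions a : nat -> nat, indexed from 1 (a 0 is unused).
   Bin number of the index l >= 1: B_n = {a_{b(n-1)+1},...,a_{bn}}, so the
   term a_l lies in bin (l-1)/b + 1. *)
Definition bin (b l : nat) : nat := l.-1 %/ b + 1.

(* Bins with nonpositive number are empty; since bins of actual terms are
   >= 1, truncated subtraction j - s and j ranging over nat are harmless
   (for j < 0 the union is empty, so the condition fails anyway). *)
Definition in_window (s b j x y : nat) : Prop :=
  j - s <= bin b x <= j /\ j - s <= bin b y <= j.

Definition legal_pair (s b x y : nat) : Prop :=
  forall j : nat, ~ in_window s b j x y.

Fixpoint legal_chain (s b : nat) (l : seq nat) : Prop :=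
  match l with
  | x :: ((y :: _) as l') => legal_pair s b x y /\ legal_chain s b l'
  | _ => True
  end.

Definition legal_decomp (s b : nat) (a : nat -> nat) (i m : nat)
  (l : seq nat) : Prop :=
  [/\ sorted (fun x y => a y < a x) l,
      all (fun x => (1 <= x) && (x < i)) l,
      \sum_(x <- l) a x = m
    & legal_chain s b l].

Definition has_legal_decomp (s b : nat) (a : nat -> nat) (i m : nat) : Prop :=
  exists l, legal_decomp s b a i m l.

Definition is_generacci (s b : nat) (a : nat -> nat) : Prop :=
  forall i, 1 <= i ->
    [/\ 0 < a i,
        ~ has_legal_decomp s b a i (a i)
      & forall m, 0 < m -> m < a i -> has_legal_decomp s b a i m].

(* f(kb + j) = sb + j - 1 for k >= 0, 1 <= j <= b. *)
Definition genf (s b x : nat) : nat := s * b + x.-1 %% b.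

(* Main.v *)
Require Import Defs.
From mathcomp Require Import all_boot zify.
Set Implicit Arguments. Unset Strict Implicit.

Definition gg (s b k : nat) := 1 + (bin b k - 1 - s) * b.

Lemma bin_mono b x y : x <= y -> bin b x <= bin b y.
Proof. move=> H; rewrite /bin leq_add2r; apply: leq_div2r; lia. Qed.

Lemma legal_g s b x k : 0 < b -> 1 <= x -> bin b x + s < bin b k -> x < gg s b k.
Proof.
move=> hb hx H.
have H1 : x.-1 %/ b < bin b k - 1 - s by move: H; rewrite /bin; lia.
rewrite ltn_divLR // in H1. rewrite /gg. lia.
Qed.

Lemma g_legal s b x k : 0 < b -> 1 <= x -> x < gg s b k -> bin b x + s < bin b k.
Proof.
move=> hb hx; rewrite /gg => H.
have H1 : x.-1 < (bin b k - 1 - s) * b by lia.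
have Ht : 0 < bin b k - 1 - s.
  case: (bin b k - 1 - s) H1 => //.
rewrite -ltn_divLR // in H1. move: H1 Ht; rewrite /bin; lia.
Qed.

Lemma g_range s b k : 0 < b -> 1 <= k -> 1 <= gg s b k <= k.
Proof.
move=> hb hk; rewrite /gg; apply/andP; split; first by rewrite add1n.
have H1 : (bin b k - 1 - s) * b <= (k.-1 %/ b) * b.
  apply: leq_mul (leqnn b); rewrite /bin; set q := _ %/ _; lia.
have H2 := leq_trunc_div k.-1 b. lia.
Qed.

Lemma legal_pair_gap s b x y : legal_pair s b x y -> bin b y <= bin b x -> bin b y + s < bin b x.
Proof.
move=> H Hle; have := H (bin b x); rewrite /in_window.
case: (ltnP (bin b y + s) (bin b x)) => // H2 H3; exfalso; apply: H3; lia.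
Qed.

Lemma gap_legal_pair s b x y : bin b y + s < bin b x -> legal_pair s b x y.
Proof. move=> H j; rewrite /in_window; lia. Qed.

Definition recc (s b : nat) (c : nat -> nat) (M : nat) :=
  c 1 = 1 /\ forall i, 2 <= i <= M -> c i = c (i - 1) + c (gg s b (i - 1)).

Lemma rec_pos s b c M : 0 < b -> recc s b c M -> forall i, 1 <= i <= M -> 0 < c i.
Proof.
move=> hb [h1 hr]; elim=> [|i IH] // HH.
case: i IH HH => [|i] IH HH; first by rewrite h1.
rewrite hr; last lia. rewrite subn1 succnK.
have : 0 < c i.+1 by apply: IH; lia. lia.
Qed.

Lemma rec_step s b c M : 0 < b -> recc s b c M -> forall i, 2 <= i <= M -> c (i - 1) < c i.
Proof.
move=> hb hR i Hi; have [h1 hr] := hR; rewrite (hr i Hi).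
have /andP [g1 g2] := @g_range s b (i - 1) hb ltac:(lia).
have : 0 < c (gg s b (i - 1)) by apply: (rec_pos hb hR); lia.
lia.
Qed.

Lemma rec_lt s b c M : 0 < b -> recc s b c M -> forall i j, 1 <= i -> i < j <= M -> c i < c j.
Proof.
move=> hb hR i j Hi; elim: j => [|j IH] // /andP [Hij HM].
have := rec_step hb hR (i := j.+1) ltac:(lia). rewrite subn1 /=.
case: (ltnP i j) => Hij'.
  have := IH ltac:(lia); lia.
have -> : i = j by lia. done.
Qed.

Lemma rec_le s b c M : 0 < b -> recc s b c M -> forall i j, 1 <= i -> i <= j <= M -> c i <= c j.
Proof.
move=> hb hR i j Hi /andP [H1 H2]; case: (ltnP i j) => H3.
  by apply: ltnW; apply: (rec_lt hb hR) => //; lia.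
have -> : i = j by lia. done.
Qed.

Lemma lemA s b c M : 0 < b -> recc s b c M -> forall l k,
  sorted (fun x y => c y < c x) (k :: l) ->
  all (fun x => (1 <= x) && (x <= M)) (k :: l) ->
  legal_chain s b (k :: l) ->
  \sum_(x <- k :: l) c x < c k + c (gg s b k).
Proof.
move=> hb hR; elim=> [|x l IH] k.
  move=> _ /= /andP [/andP [k1 kM] _] _.
  rewrite big_cons big_nil addn0 -{1}(addn0 (c k)) ltn_add2l.
  have /andP [g1 g2] := @g_range s b k hb k1.
  apply: (rec_pos hb hR); lia.
move=> /= /andP [Hxk Hp] /andP [/andP [k1 kM] Hall] [Hlp Hch].
have /andP [/andP [x1 xM] _] := Hall.
have xk : x < k.
  case: (ltnP x k) => // H; exfalso.
  have := rec_le hb hR (i := k) (j := x) k1 ltac:(lia). lia.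
have Hgap := legal_pair_gap Hlp (bin_mono b (ltnW xk)).
have xg := legal_g hb x1 Hgap.
have /andP [g1 g2] := @g_range s b k hb k1.
have := IH x Hp Hall Hch.
have [_ hr] := hR.
have Hx1 : c x.+1 = c x + c (gg s b x) by rewrite (hr x.+1) ?subn1 //; lia.
rewrite -Hx1.
have := rec_le hb hR (i := x.+1) (j := gg s b k) ltac:(lia) ltac:(lia).
move=> Ha Hb; rewrite big_cons; lia.
Qed.

Lemma decomp_weak s b c i i' m l : legal_decomp s b c i m l -> i <= i' -> legal_decomp s b c i' m l.
Proof.
move=> [H1 H2 H3 H4] Hi; split => //.
apply/allP => x Hx; have /andP [x1 xi] := allP H2 x Hx; rewrite x1 /=; lia.
Qed.

Lemma lemB s b c M : 0 < b -> recc s b c M -> forall k, 1 <= k <= M ->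
  forall m, 0 < m < c k + c (gg s b k) -> exists l, legal_decomp s b c k.+1 m l.
Proof.
move=> hb hR; have [h1 hr] := hR.
elim/ltn_ind => k IH Hk m Hm.
case: (ltnP m (c k)) => Hmk.
  case: k IH Hk Hm Hmk => [|[|k]] IH Hk Hm Hmk; first lia.
    by rewrite h1 in Hmk; lia.
  rewrite hr ?subn1 /= in Hmk; last lia.
  have [l Hl] := IH k.+1 (ltnSn _) ltac:(lia) m ltac:(lia).
  by exists l; apply: decomp_weak Hl _.
case: (ltnP (c k) m) => Hmk2; last first.
  have -> : m = c k by lia.
  exists [:: k]; split => //=; first lia.
  by rewrite big_cons big_nil addn0.
have /andP [g1 g2] := @g_range s b k hb ltac:(lia).
case Eg: (gg s b k) => [|k']; first by rewrite Eg in g1.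
rewrite Eg in Hm g1 g2.
case: k' Eg Hm g1 g2 => [|k'] Eg Hm g1 g2.
  by rewrite h1 in Hm; lia.
have Hrk : c k'.+2 = c k'.+1 + c (gg s b k'.+1) by rewrite hr ?subn1 //; lia.
have [l [Ls La Lsum Lch]] := IH k'.+1 ltac:(lia) ltac:(lia) (m - c k) ltac:(lia).
exists (k :: l); split.
- case: l Ls La Lsum Lch => [|x l] //= Ls /andP [/andP [x1 xk] La] _ _.
  rewrite Ls andbT. apply: (rec_lt hb hR); lia.
- rewrite /=; apply/andP; split; first lia.
  apply/allP => x Hx; have /andP [x1 xi] := allP La x Hx; rewrite x1 /=; lia.
- rewrite big_cons Lsum; lia.
- case: l Ls La Lsum Lch => [|x l] //= Ls /andP [/andP [x1 xk] La] _ Lch.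
  split => //. apply: gap_legal_pair. apply: (g_legal hb x1). rewrite Eg; lia.
Qed.

Lemma a1 s b a : is_generacci s b a -> a 1 = 1.
Proof.
move=> G; have [P _ H] := G 1 (leqnn 1).
case: (ltnP 1 (a 1)) => h; last lia.
have [l [_ La Ls _]] := H 1 isT h.
case: l La Ls => [|x l] /=; first by rewrite big_nil.
by move/andP => [/andP [x1 x0]]; lia.
Qed.

Lemma rec_all s b a : 0 < b -> is_generacci s b a -> forall M, recc s b a M.
Proof.
move=> hb G; have h1 := a1 G.
elim=> [|M IH]; first by split => // i; lia.
split => // i /andP [Hi HM].
case: (ltnP i M.+1) => Hi2; first by apply: IH.2; lia.
have Ei : i = M.+1 by lia.
subst i.
have M1 : 1 <= M by lia.
rewrite subn1 /=.
set v := a M + a (gg s b M).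
have [P Hno Hall] := G M.+1 isT.
have vpos : 0 < v by have := rec_pos hb IH (i := M) ltac:(lia); rewrite /v; lia.
have Hnov : ~ has_legal_decomp s b a M.+1 v.
  move=> [[|k l] [Ls La Lsum Lch]]; first by rewrite big_nil in Lsum; lia.
  have La' : all (fun x => (1 <= x) && (x <= M)) (k :: l).
    apply/allP => x Hx; have /andP [x1 xi] := allP La x Hx; rewrite x1 /=; lia.
  have := lemA hb IH Ls La' Lch; rewrite Lsum.
  have /andP [/andP [k1 kM] _] := La'.
  case: (ltnP k M) => kM'; last first.
    have -> : k = M by lia. by rewrite ltnn.
  have [_ hr] := IH.
  have Hk1 : a k.+1 = a k + a (gg s b k) by rewrite (hr k.+1) ?subn1 //; lia.
  rewrite -Hk1.
  have := rec_le hb IH (i := k.+1) (j := M) ltac:(lia) ltac:(lia). rewrite /v; lia.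
case: (ltngtP (a M.+1) v) => // H.
- exfalso; apply: Hno. apply: (lemB hb IH (k := M)); lia.
- exfalso; apply: Hnov; exact: Hall v vpos H.
Qed.

Unset Implicit Arguments.
Theorem mainTheorem2 (s b : nat) (a : nat -> nat) :
  1 <= s -> 1 <= b -> is_generacci s b a ->
  forall N j : nat, s <= N -> 2 <= j <= b.+1 ->
    let n := j + N * b in
    a n = a (n - 1) + a (n - 1 - genf s b (n - 1)) /\
    a (j + N * b) = a (j - 1 + N * b) + a (1 + (N - s) * b).
Proof.
move=> hs hb G N j HN Hj n.
have [_ hr] := rec_all hb G n.
have Hd : (n - 1).-1 = N * b + (j - 2) by rewrite /n; lia.
have Hdiv : (n - 1).-1 %/ b = N.
  by rewrite Hd divnMDl // divn_small ?addn0 //; lia.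
have Hmod : (n - 1).-1 %% b = j - 2.
  by rewrite Hd modnMDl modn_small //; lia.
have Hg : gg s b (n - 1) = 1 + (N - s) * b.
  by rewrite /gg /bin Hdiv; congr (1 + _ * b); lia.
have Hf : n - 1 - genf s b (n - 1) = 1 + (N - s) * b.
  rewrite /genf Hmod /n. have [d ->] : exists d, N = s + d by exists (N - s); lia.
  rewrite mulnDl; have -> : s + d - s = d by lia. lia.
have Hn : a n = a (n - 1) + a (1 + (N - s) * b).
  rewrite (hr n) ?Hg //; rewrite /n; lia.
split; first by rewrite Hf.
have -> : j - 1 + N * b = n - 1 by rewrite /n; lia.
exact: Hn.
Qed.
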